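(* Let $\mathcal{A}$ be a Banach algebra and $\mathcal{U}$ a Banach $\mathcal{A}$-bimodule. Suppose that there are $\mathcal{A}$-bimodule homomorphisms $\phi:\mathcal{A}\to\mathcal{U}$ and $\psi:\mathcal{U}\to\mathcal{A}$ such that $\phi\circ\psi=I_{\mathcal{U}}$, the identity mapping on $\mathcal{U}$. If every derivation on $T(\mathcal{A},\mathcal{U})$ is continuous, then every derivation on $\mathcal{A}$ is continuous.
   Context: A derivation on a Banach algebra $\mathcal{B}$ is a linear map $\delta:\mathcal{B}\to\mathcal{B}$ with $\delta(ab)=a\delta(b)+\delta(a)b$; it is not assumed continuous. An $\mathcal{A}$-bimodule homomorphism between $\mathcal{A}$-bimodules is a linear map $\phi$ with $\phi(ax)=a\phi(x)$ and $\phi(xa)=\phi(x)a$. The module extension Banach algebra $T(\mathcal{A},\mathcal{U})$ is $\mathcal{A}\oplus\mathcal{U}$ with norm $\|(a,u)\|=\|a\|+\|u\|$ and multiplication $(a,u)(b,v)=(ab,av+ub)$. *)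

(* Defs.v *)
From HB Require Import structures.
From mathcomp Require Import all_boot all_order all_algebra.
From mathcomp Require Import all_classical all_reals all_analysis.
Set Implicit Arguments. Unset Strict Implicit. Unset Printing Implicit Defensive.
Import Order.TTheory GRing.Theory Num.Theory.
Import numFieldNormedType.Exports.
Local Open Scope ring_scope.

Definition lin_map (K : numFieldType) (X Y : lmodType K) (f : X -> Y) : Prop :=
  forall (k : K) (x y : X), f (k *: x + y) = k *: f x + f y.

Definition bilin_map (K : numFieldType) (X Y Z : lmodType K) (m : X -> Y -> Z) : Prop :=
  (forall y : Y, lin_map (fun x : X => m x y)) /\ (forall x : X, lin_map (m x)).

Definition banach_algebra (K : numFieldType) (A : completeNormedModType K)
    (mul : A -> A -> A) : Prop :=
  [/\ bilin_map mul,
      (forall a b c : A, mul a (mul b c) = mul (mul a b) c) &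
      (forall a b : A, `|mul a b| <= `|a| * `|b|)].

Definition banach_bimodule (K : numFieldType) (A : completeNormedModType K)
    (mul : A -> A -> A) (U : completeNormedModType K)
    (l : A -> U -> U) (r : U -> A -> U) : Prop :=
  [/\ bilin_map l, bilin_map r,
      [/\ (forall (a b : A) (u : U), l (mul a b) u = l a (l b u)),
          (forall (u : U) (a b : A), r u (mul a b) = r (r u a) b) &
          (forall (a : A) (u : U) (b : A), r (l a u) b = l a (r u b))] &
      (forall (a : A) (u : U), `|l a u| <= `|a| * `|u|) /\
      (forall (u : U) (a : A), `|r u a| <= `|u| * `|a|)].

Definition bimod_hom (K : numFieldType) (A : lmodType K) (X Y : lmodType K)
    (lX : A -> X -> X) (rX : X -> A -> X) (lY : A -> Y -> Y) (rY : Y -> A -> Y)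
    (f : X -> Y) : Prop :=
  [/\ lin_map f,
      (forall (a : A) (x : X), f (lX a x) = lY a (f x)) &
      (forall (x : X) (a : A), f (rX x a) = rY (f x) a)].

Definition derivation (K : numFieldType) (X : lmodType K) (mul : X -> X -> X)
    (d : X -> X) : Prop :=
  lin_map d /\ forall a b : X, d (mul a b) = mul a (d b) + mul (d a) b.

(* Module extension algebra T(A,U) = A (+) U :
   (a,u)(b,v) = (ab, av + ub), norm ||(a,u)|| = ||a|| + ||u||. *)
Definition Tmul (K : numFieldType) (A U : completeNormedModType K)
    (mul : A -> A -> A) (l : A -> U -> U) (r : U -> A -> U)
    (x y : A * U) : A * U :=
  (mul x.1 y.1, l x.1 y.2 + r x.2 y.1).

Definition Tnorm (K : numFieldType) (A U : completeNormedModType K)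
    (x : A * U) : K := `|x.1| + `|x.2|.

Definition T_continuous (K : numFieldType) (A U : completeNormedModType K)
    (D : A * U -> A * U) : Prop :=
  forall (x : A * U) (e : K), 0 < e -> exists2 dl : K, 0 < dl &
    forall y : A * U, Tnorm (y - x) < dl -> Tnorm (D y - D x) < e.

(* Main.v *)
Require Import Defs.
From HB Require Import structures.
From mathcomp Require Import all_boot all_order all_algebra.
From mathcomp Require Import all_classical all_reals all_analysis.
Import Order.TTheory GRing.Theory Num.Theory.
Import numFieldNormedType.Exports.
Local Open Scope ring_scope.

Lemma lin_add (K : numFieldType) (X Y : lmodType K) (f : X -> Y) :
  lin_map f -> forall x y, f (x + y) = f x + f y.
Proof. by move=> h x y; rewrite -[x in LHS]scale1r h scale1r. Qed.

Lemma pair_ext (X Y : Type) (p q : X * Y) : p.1 = q.1 -> p.2 = q.2 -> p = q.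
Proof. by case: p; case: q => /= ? ? ? ? -> ->. Qed.

Theorem proposition2p3 (K : numFieldType)
  (A : completeNormedModType K) (mul : A -> A -> A)
  (U : completeNormedModType K) (l : A -> U -> U) (r : U -> A -> U)
  (phi : A -> U) (psi : U -> A) :
  banach_algebra mul ->
  banach_bimodule mul l r ->
  bimod_hom mul mul l r phi ->
  bimod_hom l r mul mul psi ->
  (forall u : U, phi (psi u) = u) ->
  (forall D : A * U -> A * U,
      derivation (Tmul mul l r) D -> T_continuous D) ->
  forall d : A -> A, derivation mul d -> continuous d.
Proof.
move=> _ [[_ lA] [rA _] _ _] [phL phl phr] [psL psl psr] phps HD d [dL dm].
pose D (x : A * U) : A * U := (d x.1, phi (d (psi x.2))).
have Dder : derivation (Tmul mul l r) D.
  split.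
    move=> k [a u] [b v]; apply: pair_ext => /=.
      by rewrite dL.
    by rewrite psL dL phL.
  move=> [a u] [b v]; apply: pair_ext => /=.
    by rewrite /Tmul /= dm.
  rewrite /Tmul /= (@lin_add _ _ _ _ psL) psl psr (@lin_add _ _ _ _ dL) !dm.
  rewrite !(@lin_add _ _ _ _ phL) (phl a) (phl (d a)) (phr (psi u)) (phr (d (psi u))) !phps.
  by rewrite addrACA.
have Hc := HD D Dder.
move=> x; apply/cvgrPdist_lt => e e0.
have [dl dl0 H] := Hc (x, 0) e e0.
apply/nbhs_ballP; exists dl => // y /=; rewrite -ball_normE /= => xy.
have := H (y, 0); rewrite /Tnorm /D /= subrr normr0 addr0 => /(_ _).
rewrite distrC => /(_ xy) h.
rewrite distrC; apply: le_lt_trans h; rewrite lerDl normr_ge0 //.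
Qed.
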